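(* Let $L_2$ be the free Lie algebra generated by $x,y$ over a field $K$ of characteristic zero, and let $\xi$ be an automorphism of $L_2$ which maps the algebra $L_2^{S_2}$ of symmetric polynomials into itself (i.e. $\xi\in\mathrm{Aut}(L_2^{S_2})$). Then there exist $a,b\in K$ with $c:=a^2-b^2\neq 0$ such that \[\xi(x)=ax+by,\quad \xi(y)=bx+ay,\] \[\xi^{-1}(x)=c^{-1}ax-c^{-1}by,\quad \xi^{-1}(y)=-c^{-1}bx+c^{-1}ay.\]
   Context: The symmetric group $S_2$ acts on $L_2$ by swapping $x$ and $y$; an element $p(x,y)$ is symmetric if $p(x,y)=p(y,x)$, and $L_2^{S_2}$ is the algebra of symmetric elements. *)

(* Defs.v *)
From HB Require Import structures.
From mathcomp Require Import all_boot all_order all_algebra.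
Set Implicit Arguments. Unset Strict Implicit. Unset Printing Implicit Defensive.
Import Order.TTheory GRing.Theory Num.Theory.
Local Open Scope ring_scope.

(* The ambient free associative algebra K<<x,y>> of (noncommutative) formal
   series in two variables: a series is a map from words over {x,y} to K,
   where the letter [false] stands for x and [true] for y. *)
Definition ncser (K : fieldType) := seq bool -> K.

Section NC.
Variable K : fieldType.

Definition ncadd (f g : ncser K) : ncser K := fun w => f w + g w.
Definition ncscale (a : K) (f : ncser K) : ncser K := fun w => a * f w.
Definition ncmul (f g : ncser K) : ncser K :=
  fun w => \sum_(i < (size w).+1) f (take i w) * g (drop i w).
Definition nclie (f g : ncser K) : ncser K :=
  fun w => ncmul f g w - ncmul g f w.

Definition ncx : ncser K := fun w => if w == [:: false] then 1 else 0.
Definition ncy : ncser K := fun w => if w == [:: true] then 1 else 0.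

(* L_2: the Lie subalgebra of K<x,y> generated by x and y, i.e. the free
   Lie algebra on x, y. *)
Inductive in_L2 : ncser K -> Prop :=
  | L2_x : in_L2 ncx
  | L2_y : in_L2 ncy
  | L2_add : forall f g, in_L2 f -> in_L2 g -> in_L2 (ncadd f g)
  | L2_scale : forall a f, in_L2 f -> in_L2 (ncscale a f)
  | L2_lie : forall f g, in_L2 f -> in_L2 g -> in_L2 (nclie f g).

Definition ncswap (f : ncser K) : ncser K := fun w => f (map negb w).

Definition symmetric_L2 (f : ncser K) : Prop := in_L2 f /\ ncswap f = f.

(* Lie algebra endomorphism of L_2 (represented on the ambient type, only
   its values on L_2 matter). *)
Definition lie_endo (xi : ncser K -> ncser K) : Prop :=
  [/\ forall f, in_L2 f -> in_L2 (xi f),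
      forall a f g, in_L2 f -> in_L2 g ->
        xi (ncadd (ncscale a f) g) = ncadd (ncscale a (xi f)) (xi g)
    & forall f g, in_L2 f -> in_L2 g -> xi (nclie f g) = nclie (xi f) (xi g)].

Definition lie_aut_with_inv (xi xiinv : ncser K -> ncser K) : Prop :=
  [/\ lie_endo xi,
      forall f, in_L2 f -> in_L2 (xiinv f),
      forall f, in_L2 f -> xiinv (xi f) = f
    & forall f, in_L2 f -> xi (xiinv f) = f].

End NC.

(* Main.v *)
Require Import Defs.
From HB Require Import structures.
From mathcomp Require Import all_boot all_order all_algebra ring zify.
From Stdlib Require Import FunctionalExtensionality.
Set Implicit Arguments. Unset Strict Implicit. Unset Printing Implicit Defensive.
Import GRing.Theory.
Local Open Scope ring_scope.


Section Basic.
Variable K : fieldType.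
Implicit Types f g h : ncser K.

Definition ncone : ncser K := fun w => if w == [::] then 1 else 0.
Definition nczero : ncser K := fun _ => 0.
Definition dc (c : bool) f : ncser K := fun w => f (c :: w).

Lemma ncmul_nil f g : ncmul f g [::] = f [::] * g [::].
Proof. by rewrite /ncmul big_ord_recl big_ord0 addr0. Qed.

Lemma dc_mul c f g :
  dc c (ncmul f g) = ncadd (ncmul (dc c f) g) (ncscale (f [::]) (dc c g)).
Proof.
apply: functional_extensionality => w.
by rewrite /dc /ncmul /ncadd /ncscale /= big_ord_recl /= addrC.
Qed.

Lemma ncmul_addl f1 f2 g : ncmul (ncadd f1 f2) g = ncadd (ncmul f1 g) (ncmul f2 g).
Proof.
apply: functional_extensionality => w.
by rewrite /ncmul /ncadd -big_split /=; apply: eq_bigr => i _; rewrite mulrDl.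
Qed.

Lemma ncmul_addr f g1 g2 : ncmul f (ncadd g1 g2) = ncadd (ncmul f g1) (ncmul f g2).
Proof.
apply: functional_extensionality => w.
by rewrite /ncmul /ncadd -big_split /=; apply: eq_bigr => i _; rewrite mulrDr.
Qed.

Lemma ncmul_scalel a f g : ncmul (ncscale a f) g = ncscale a (ncmul f g).
Proof.
apply: functional_extensionality => w.
by rewrite /ncmul /ncscale mulr_sumr; apply: eq_bigr => i _; rewrite mulrA.
Qed.

Lemma ncmul_scaler a f g : ncmul f (ncscale a g) = ncscale a (ncmul f g).
Proof.
apply: functional_extensionality => w.
by rewrite /ncmul /ncscale mulr_sumr; apply: eq_bigr => i _; rewrite mulrCA.
Qed.

Lemma ncmul_assoc f g h : ncmul (ncmul f g) h = ncmul f (ncmul g h).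
Proof.
apply: functional_extensionality => w.
elim: w f g h => [|c w IH] f g h.
  by rewrite !ncmul_nil mulrA.
have E : forall F, F (c :: w) = dc c F w by [].
rewrite (E (ncmul (ncmul f g) h)) (E (ncmul f (ncmul g h))).
rewrite (dc_mul c (ncmul f g) h) (dc_mul c f g) (dc_mul c f (ncmul g h)) (dc_mul c g h).
rewrite ncmul_addl ncmul_scalel ncmul_nil /ncadd /ncscale IH.
by rewrite mulrDr addrA mulrA.
Qed.

End Basic.


Section Shuffle.
Variable K : fieldType.
Implicit Types f g h : ncser K.

Lemma sumS n (G : nat -> K) : \sum_(i < n.+1) G i = G 0%N + \sum_(i < n) G i.+1.
Proof. by rewrite big_ord_recl; congr (_ + _); apply: eq_bigr => i _; rewrite lift0. Qed.

Fixpoint Phi (s : seq bool) : ncser K -> seq bool -> K :=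
  match s with
  | [::] => fun f t => f t
  | a :: s' => fix Phi2 (f : ncser K) (t : seq bool) {struct t} : K :=
      match t with
      | [::] => f (a :: s')
      | b :: t' => Phi s' (dc a f) (b :: t') + Phi2 (dc b f) t'
      end
  end.

Lemma Phi_nil_l f t : Phi [::] f t = f t. Proof. by []. Qed.
Lemma Phi_nil_r s f : Phi s f [::] = f s. Proof. by case: s. Qed.
Lemma Phi_cons a s b t f :
  Phi (a :: s) f (b :: t) = Phi s (dc a f) (b :: t) + Phi (a :: s) (dc b f) t.
Proof. by []. Qed.

Arguments Phi : simpl never.

Lemma Phi_lin s t (al be : K) (F G : ncser K) :
  Phi s (fun w => al * F w + be * G w) t = al * Phi s F t + be * Phi s G t.
Proof.
elim: s t F G => [|a s IHs] t F G; first by [].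
elim: t F G => [|b t IHt] F G; first by rewrite !Phi_nil_r.
rewrite !Phi_cons.
have -> : dc a (fun w => al * F w + be * G w) = (fun w => al * dc a F w + be * dc a G w) by [].
have -> : dc b (fun w => al * F w + be * G w) = (fun w => al * dc b F w + be * dc b G w) by [].
by rewrite IHs IHt; ring.
Qed.

Lemma Phi_ext s t F G : (forall w, size w = (size s + size t)%N -> F w = G w) ->
  Phi s F t = Phi s G t.
Proof.
elim: s t F G => [|a s IHs] t F G; first by move=> H; apply: H.
elim: t F G => [|b t IHt] F G H.
  by rewrite !Phi_nil_r; apply: H; rewrite addn0.
rewrite !Phi_cons (IHs _ (dc a F) (dc a G)) ?(IHt (dc b F) (dc b G)) //.
  by move=> w Hw; apply: H; rewrite /= Hw /= addnS.
by move=> w Hw; apply: H; rewrite /= Hw addSn.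
Qed.

Lemma sum_split1 n (F : nat -> K) :
  \sum_(0 <= i < n.+1) F i = F 0%N + \sum_(0 <= i < n) F i.+1.
Proof. by rewrite big_nat_recl. Qed.

Lemma sum_split2 m n (F : nat -> nat -> K) :
  \sum_(0 <= i < m.+1) \sum_(0 <= j < n.+1) F i j =
  F 0%N 0%N + \sum_(0 <= j < n) F 0%N j.+1 +
  \sum_(0 <= i < m) (F i.+1 0%N + \sum_(0 <= j < n) F i.+1 j.+1).
Proof.
rewrite sum_split1 sum_split1; congr (_ + _).
by apply: eq_bigr => i _; rewrite sum_split1.
Qed.

Lemma Phi_mul s t f g : Phi s (ncmul f g) t =
  \sum_(0 <= i < (size s).+1) \sum_(0 <= j < (size t).+1)
     Phi (take i s) f (take j t) * Phi (drop i s) g (drop j t).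
Proof.
elim: s t f g => [|a s IHs] t f g.
  by rewrite big_nat_recl // big_geq // addr0 big_mkord.
elim: t f g => [|b t IHt] f g.
  rewrite Phi_nil_r /ncmul big_mkord; apply: eq_bigr => i _.
  by rewrite big_nat_recl // big_geq // addr0 !Phi_nil_r.
rewrite Phi_cons (dc_mul a f g) (dc_mul b f g).
have -> : forall F G c, Phi s (ncadd F (ncscale c G)) (b :: t) = Phi s F (b :: t) + c * Phi s G (b :: t).
  move=> F G c; have := Phi_lin s (b :: t) 1 c F G; rewrite mul1r => <-.
  by apply: Phi_ext => w _; rewrite /ncadd /ncscale mul1r.
have -> : forall F G c, Phi (a :: s) (ncadd F (ncscale c G)) t = Phi (a :: s) F t + c * Phi (a :: s) G t.
  move=> F G c; have := Phi_lin (a :: s) t 1 c F G; rewrite mul1r => <-.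
  by apply: Phi_ext => w _; rewrite /ncadd /ncscale mul1r.
rewrite IHs IHt.
have Eg : Phi (a :: s) g (b :: t) = Phi s (dc a g) (b :: t) + Phi (a :: s) (dc b g) t by [].
rewrite [size (a :: s)]/= [size (b :: t)]/=.
rewrite [in RHS]sum_split2.
under [in LHS]eq_bigr => i _ do rewrite sum_split1.
rewrite [in LHS]big_split.
rewrite [X in _ + (X + _) = _]sum_split1.
set A0 := \sum_(0 <= i < (size s).+1) _.
set A1 := \sum_(0 <= i < (size s).+1) \sum_(0 <= j < (size t).+1) _.
set B0 := \sum_(0 <= j < (size t).+1) _.
set B1 := \sum_(0 <= i < (size s).+1) \sum_(0 <= j < (size t).+1) _.
rewrite [in RHS]big_split.
have -> : \sum_(0 <= i < (size s).+1)
     Phi (take i.+1 (a :: s)) f (take 0 (b :: t)) *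
      Phi (drop i.+1 (a :: s)) g (drop 0 (b :: t)) = A0.
  by apply: eq_bigr => i _; rewrite /= !Phi_nil_r.
have -> : \sum_(0 <= i < (size s).+1) \sum_(0 <= j < (size t).+1)
         Phi (take i.+1 (a :: s)) f (take j.+1 (b :: t)) *
         Phi (drop i.+1 (a :: s)) g (drop j.+1 (b :: t)) = A1 + B1.
  rewrite /A1 /B1 -big_split; apply: eq_bigr => i _.
  rewrite -big_split; apply: eq_bigr => j _.
  by rewrite /= Phi_cons mulrDl.
have -> : Phi (take 0 (a :: s)) f (take 0 (b :: t)) *
  Phi (drop 0 (a :: s)) g (drop 0 (b :: t)) = f [::] * Phi (a :: s) g (b :: t) by [].
rewrite Eg.
change (A0 + A1 + f [::] * Phi s (dc a g) (b :: t) +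
  (B0 + B1 + f [::] * Phi (a :: s) (dc b g) t) =
  f [::] * (Phi s (dc a g) (b :: t) + Phi (a :: s) (dc b g) t) + B0 + (A0 + (A1 + B1))).
ring.
Qed.

End Shuffle.


Section Ree.
Variable K : fieldType.
Implicit Types f g h : ncser K.

Lemma sum_delta m i0 (c : K) :
  \sum_(0 <= i < m) (if i == i0 then c else 0) = if (i0 < m)%N then c else 0.
Proof.
elim: m => [|m IH]; first by rewrite big_geq.
rewrite big_nat_recr //= IH ltnS.
by case: (ltngtP i0 m) => H; rewrite ?addr0 ?add0r.
Qed.

Lemma sum_delta2 m n i0 j0 (c : K) : (i0 < m)%N -> (j0 < n)%N ->
  \sum_(0 <= i < m) \sum_(0 <= j < n) (if (i == i0) && (j == j0) then c else 0) = c.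
Proof.
move=> Hi Hj.
transitivity (\sum_(0 <= i < m) (if i == i0 then c else 0)); last by rewrite sum_delta Hi.
apply: eq_bigr => i _; case: (i == i0) => /=; last by rewrite big1.
by rewrite sum_delta Hj.
Qed.

Lemma Phi_zero s t : Phi s (fun _ => (0 : K)) t = 0.
Proof.
elim: s t => [|a s IHs] t; first by [].
elim: t => [|b t IHt]; first by rewrite Phi_nil_r.
by rewrite Phi_cons IHs IHt addr0.
Qed.

Lemma Phi_mul_prim s t f g : s != [::] -> t != [::] -> f [::] = 0 -> g [::] = 0 ->
  (forall s' t', s' != [::] -> t' != [::] -> Phi s' f t' = 0) ->
  (forall s' t', s' != [::] -> t' != [::] -> Phi s' g t' = 0) ->
  Phi s (ncmul f g) t = f t * g s + f s * g t.
Proof.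
move=> sn tn f0 g0 Hf Hg; rewrite Phi_mul.
have ps : (0 < size s)%N by rewrite lt0n size_eq0.
have pt : (0 < size t)%N by rewrite lt0n size_eq0.
transitivity (\sum_(0 <= i < (size s).+1) \sum_(0 <= j < (size t).+1)
   ((if (i == 0%N) && (j == size t) then f t * g s else 0) +
    (if (i == size s) && (j == 0%N) then f s * g t else 0))).
  apply: eq_big_nat => i /andP[_ Hi]; apply: eq_big_nat => j /andP[_ Hj].
  rewrite ltnS in Hi Hj.
  have st0 : (size t == 0%N) = false by apply/negbTE; rewrite -lt0n.
  have ss0 : (size s == 0%N) = false by apply/negbTE; rewrite -lt0n.
  case: i Hi => [|i] Hi; case: j Hj => [|j] Hj.
  - by rewrite !take0 !drop0 Phi_nil_l f0 mul0r [0%N == size t]eq_sym st0 [0%N == size s]eq_sym ss0 /= addr0.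
  - rewrite !take0 !drop0 Phi_nil_l andbF /= addr0.
    have [E|Hne] := eqVneq j.+1 (size t).
      by rewrite E take_size drop_size Phi_nil_r.
    have Hlt : (j.+1 < size t)%N by rewrite ltn_neqAle Hne; exact: Hj.
    rewrite Hg ?mulr0 //; by rewrite -size_eq0 size_drop subn_eq0 -ltnNge.
  - rewrite !take0 !drop0 Phi_nil_r andbT /= add0r.
    have [E|Hne] := eqVneq i.+1 (size s).
      by rewrite E take_size drop_size Phi_nil_l.
    have Hlt : (i.+1 < size s)%N by rewrite ltn_neqAle Hne; exact: Hi.
    rewrite Hg ?mulr0 //; by rewrite -size_eq0 size_drop subn_eq0 -ltnNge.
  - rewrite /= Hf ?mul0r ?andbF ?addr0 //.
    + by move: sn; case: (s).
    + by move: tn; case: (t).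
under eq_bigr do rewrite big_split /=.
by rewrite big_split /= sum_delta2 // sum_delta2.
Qed.

Lemma L2_nil f : in_L2 f -> f [::] = 0.
Proof.
elim=> {f} [||f g _ Hf _ Hg|a f _ Hf|f g _ Hf _ Hg] //.
- by rewrite /ncadd Hf Hg addr0.
- by rewrite /ncscale Hf mulr0.
- by rewrite /nclie !ncmul_nil Hf Hg !mul0r subrr.
Qed.

Lemma Ree f : in_L2 f ->
  forall s t, s != [::] -> t != [::] -> Phi s f t = 0.
Proof.
move=> Hf0; elim: Hf0 => {f} [||f g Lf Hf Lg Hg|a f Lf Hf|f g Lf Hf Lg Hg] s t sn tn.
- rewrite -(Phi_zero s t); apply: Phi_ext => w Hw.
  rewrite /ncx; case: eqP => // Ew; move: Hw; rewrite Ew /=.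
  by case: s sn => // ? ?; case: t tn => // ? ?; rewrite /= addnS.
- rewrite -(Phi_zero s t); apply: Phi_ext => w Hw.
  rewrite /ncy; case: eqP => // Ew; move: Hw; rewrite Ew /=.
  by case: s sn => // ? ?; case: t tn => // ? ?; rewrite /= addnS.
- have := Phi_lin s t 1 1 f g; rewrite !mul1r Hf // Hg // addr0 => <-.
  by apply: Phi_ext => w _; rewrite /ncadd !mul1r.
- have := Phi_lin s t a 0 f f; rewrite mul0r addr0 Hf // mulr0 => <-.
  by apply: Phi_ext => w _; rewrite /ncscale mul0r addr0.
- have := Phi_lin s t 1 (-1) (ncmul f g) (ncmul g f).
  rewrite !(Phi_mul_prim sn tn) ?L2_nil //.
  rewrite mul1r mulN1r => E.
  transitivity (f t * g s + f s * g t - (g t * f s + g s * f t)); last by ring.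
  rewrite -E; apply: Phi_ext => w _; by rewrite /nclie mul1r mulN1r.
Qed.

End Ree.


Fixpoint lexle (u v : seq bool) : bool :=
  match u, v with
  | [::], _ => true
  | _ :: _, [::] => false
  | a :: u', b :: v' => if a == b then lexle u' v' else ~~ a && b
  end.

Definition lexlt u v := lexle u v && (u != v).
Definition lexmax u v := if lexle u v then v else u.

Lemma lexle_refl u : lexle u u.
Proof. by elim: u => //= a u ->; rewrite eqxx. Qed.

Lemma lexle_nil u : lexle [::] u. Proof. by []. Qed.
Lemma lexle_nilr u : lexle u [::] = (u == [::]). Proof. by case: u. Qed.

Lemma lexle_cons a u v : lexle (a :: u) (a :: v) = lexle u v.
Proof. by rewrite /= eqxx. Qed.

Lemma lexle_trans u v w : lexle u v -> lexle v w -> lexle u w.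
Proof.
elim: u v w => [|a u IH] [|b v] [|c w] //=.
by case: a b c => [] [] [] //=; apply: IH.
Qed.

Lemma lexle_anti u v : lexle u v -> lexle v u -> u = v.
Proof.
elim: u v => [|a u IH] [|b v] //=.
by case: a b => [] [] //= H1 H2; rewrite (IH v).
Qed.

Lemma lexle_total u v : lexle u v || lexle v u.
Proof.
elim: u v => [|a u IH] [|b v] //=.
by case: a b => [] [] //=; apply: IH.
Qed.

Lemma lexle_cat p u v : lexle (p ++ u) (p ++ v) = lexle u v.
Proof. by elim: p => //= a p IH; rewrite eqxx. Qed.

Lemma lexle_prefix u v : lexle u (u ++ v).
Proof. by elim: u => //= a u IH; rewrite eqxx. Qed.

Lemma lexltNge u v : lexlt u v = ~~ lexle v u.
Proof.
rewrite /lexlt; case: (boolP (lexle v u)) => H.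
  case: (boolP (lexle u v)) => //= H2; by rewrite (lexle_anti H2 H) eqxx.
have := lexle_total u v; rewrite (negbTE H) orbF => ->; apply/eqP => E.
by move: H; rewrite E lexle_refl.
Qed.

Lemma lexleNgt u v : lexle u v = ~~ lexlt v u.
Proof. by rewrite lexltNge negbK. Qed.

Lemma lexlt_le u v : lexlt u v -> lexle u v.
Proof. by case/andP. Qed.

Lemma lexle_lt_trans u v w : lexle u v -> lexlt v w -> lexlt u w.
Proof.
rewrite !lexltNge => H1; apply: contra => H2; exact: lexle_trans H2 H1.
Qed.

Lemma lexlt_le_trans u v w : lexlt u v -> lexle v w -> lexlt u w.
Proof.
rewrite !lexltNge => H1 H2; apply: contra H1 => H3; exact: lexle_trans H2 H3.
Qed.

Lemma lexlt_irr u : lexlt u u = false.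
Proof. by rewrite lexltNge lexle_refl. Qed.

Lemma lexmax_l u v : lexle u (lexmax u v).
Proof.
rewrite /lexmax; case: ifP => // H; exact: lexle_refl.
Qed.

Lemma lexmax_r u v : lexle v (lexmax u v).
Proof.
rewrite /lexmax; case: ifP => H; first exact: lexle_refl.
by have := lexle_total u v; rewrite H.
Qed.

Lemma lexmax_le u v w : lexle u w -> lexle v w -> lexle (lexmax u v) w.
Proof. by rewrite /lexmax; case: ifP. Qed.

(* lex-largest interleaving *)
Fixpoint M (s : seq bool) : seq bool -> seq bool :=
  match s with
  | [::] => fun t => t
  | a :: s' => fix M2 (t : seq bool) : seq bool :=
      match t with
      | [::] => a :: s'
      | b :: t' => lexmax (a :: M s' (b :: t')) (b :: M2 t')
      end
  end.

Lemma M_nil_l t : M [::] t = t. Proof. by []. Qed.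
Lemma M_nil_r s : M s [::] = s. Proof. by case: s. Qed.
Lemma M_cons a s b t :
  M (a :: s) (b :: t) = lexmax (a :: M s (b :: t)) (b :: M (a :: s) t).
Proof. by []. Qed.
Arguments M : simpl never.

Lemma size_M s t : size (M s t) = (size s + size t)%N.
Proof.
elim: s t => [|a s IHs] t; first by [].
elim: t => [|b t IHt]; first by rewrite M_nil_r addn0.
rewrite M_cons /lexmax; case: ifP => _ /=.
  by rewrite IHt addnS.
by rewrite IHs.
Qed.

Lemma M_ge_st s t : lexle (s ++ t) (M s t).
Proof.
elim: s t => [|a s IHs] t; first exact: lexle_refl.
case: t => [|b t]; first by rewrite M_nil_r cats0 lexle_refl.
rewrite M_cons; apply: lexle_trans (lexmax_l _ _).
by rewrite cat_cons lexle_cons.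
Qed.

Lemma M_ge_ts s t : lexle (t ++ s) (M s t).
Proof.
elim: t s => [|b t IHt] s; first by rewrite M_nil_r lexle_refl.
case: s => [|a s]; first by rewrite M_nil_l cats0 lexle_refl.
rewrite M_cons; apply: lexle_trans (lexmax_r _ _).
by rewrite cat_cons lexle_cons.
Qed.

Lemma lexle_cons_lt a b u v : a != b -> lexle (a :: u) (b :: v) = ~~ a && b.
Proof. by move=> /negbTE H; rewrite /= H. Qed.

Lemma M_Y n A B p : (size A + size B <= n)%N -> lexle B A ->
  lexle (M (p ++ A) B) (M A (p ++ B)).
Proof.
elim: n A B p => [|n IHn] A B p.
  rewrite leqn0 addn_eq0 => /andP[/nilP -> /nilP ->] _.
  by rewrite !cats0 M_nil_r M_nil_l lexle_refl.
move=> Hn HBA.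
case: B HBA Hn => [|b B] HBA Hn.
  rewrite cats0 M_nil_r; exact: M_ge_ts.
case: A HBA Hn => [|a A] HBA Hn; first by [].
elim: p => [|c p IHp]; first exact: lexle_refl.
rewrite cat_cons M_cons.
apply: lexmax_le.
  apply: lexle_trans (lexmax_r _ _).
  by rewrite lexle_cons.
have Hba : lexle (b :: B) (a :: A) := HBA.
case: (eqVneq b a) => [Eba|Nba].
  subst b; rewrite lexle_cons in HBA.
  apply: lexle_trans (lexmax_l _ _); rewrite lexle_cons.
  have -> : c :: p ++ a :: A = (c :: p ++ [:: a]) ++ A by rewrite /= -catA.
  have E2 : c :: p ++ a :: B = (c :: p ++ [:: a]) ++ B by rewrite /= -catA.
  rewrite cat_cons in E2; rewrite E2.
  apply: IHn => //; move: Hn; by rewrite /= addSn addnS ltnS => /ltnW.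
apply: lexle_trans (lexmax_l _ _).
move: Hba; rewrite (lexle_cons_lt _ _ Nba) => /andP[nb ha].
by rewrite (lexle_cons_lt _ _ Nba) nb ha.
Qed.

Definition Dcond (s t : seq bool) := forall i, (i < size s)%N -> lexle t (drop i s).

Lemma M_greedy s t : Dcond s t -> M s t = s ++ t.
Proof.
elim: s => [|a s IHs] D; first by [].
case: t IHs D => [|b t] IHs D; first by rewrite M_nil_r cats0.
have D' : Dcond s (b :: t) by move=> i Hi; apply: (D i.+1).
rewrite M_cons IHs // /lexmax.
have Hba : lexle (b :: t) (a :: s) by apply: (D 0%N).
case: ifP => // H; apply: lexle_anti; last exact: H.
case: (eqVneq b a) => [Eba|Nba].
  subst b; rewrite lexle_cons in Hba.
  rewrite cat_cons lexle_cons -(IHs D').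
  exact: (M_Y [:: a] (leqnn _) Hba).
move: Hba; rewrite (lexle_cons_lt _ _ Nba) => /andP[nb ha].
by rewrite (lexle_cons_lt _ _ Nba) nb ha.
Qed.


Lemma lexlt_cons a u v : lexlt (a :: u) (a :: v) = lexlt u v.
Proof. by rewrite /lexlt lexle_cons eqseq_cons eqxx. Qed.

Lemma LX t sg r : lexle t (sg ++ r) ->
  (exists2 rho, t = sg ++ rho & rho != [::]) \/ lexle t sg.
Proof.
elim: sg t => [|c sg IH] t.
  case: t => [|b t] _; first by right.
  by left; exists (b :: t).
case: t => [|b t]; first by move=> _; right.
rewrite cat_cons; case: (eqVneq b c) => [->|Nbc].
  rewrite !lexle_cons => /IH [[rho -> Hr]|H]; last by right.
  by left; exists rho.
by rewrite !(lexle_cons_lt _ _ Nbc) => H; right.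
Qed.

Lemma exists_lexmin (L : seq (seq bool)) : L != [::] ->
  exists2 m, m \in L & forall w, w \in L -> lexle m w.
Proof.
elim: L => [|w0 L IH] // _.
case: (eqVneq L [::]) => [->|NL].
  exists w0; first by rewrite inE eqxx.
  by move=> w; rewrite inE => /eqP ->; apply: lexle_refl.
have [m mL Hm] := IH NL.
case: (boolP (lexle w0 m)) => H.
  exists w0; first by rewrite inE eqxx.
  move=> w; rewrite inE => /orP[/eqP ->|wL]; first exact: lexle_refl.
  exact: lexle_trans H (Hm _ wL).
exists m; first by rewrite inE mL orbT.
move=> w; rewrite inE => /orP[/eqP ->|wL]; last exact: Hm.
by have := lexle_total w0 m; rewrite (negbTE H).
Qed.

Section Top.
Variable K : fieldType.
Hypothesis charK0 : [pchar K] =i pred0.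
Implicit Types f g h : ncser K.

Definition istop f (d : nat) (a : seq bool) :=
  [/\ size a = d, f a != 0, (forall w, (d < size w)%N -> f w = 0)
    & (forall w, size w = d -> lexlt w a -> f w = 0)].

Lemma Phi_max s t f :
  (forall w, size w = (size s + size t)%N -> lexlt w (M s t) -> f w = 0) ->
  exists2 N, (0 < N)%N & Phi s f t = N%:R * f (M s t).
Proof.
elim: s t f => [|a s IHs] t f H.
  by exists 1%N => //; rewrite mul1r.
elim: t f H => [|b t IHt] f H.
  by exists 1%N => //; rewrite mul1r Phi_nil_r M_nil_r.
set X := a :: M s (b :: t).
set Y := b :: M (a :: s) t.
have EM : M (a :: s) (b :: t) = lexmax X Y by rewrite M_cons.
have sX : size X = (size (a :: s) + size (b :: t))%N by rewrite /= size_M.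
have sY : size Y = (size (a :: s) + size (b :: t))%N by rewrite /= size_M addnS.
have [N1 N1p E1] : exists2 N, (0 < N)%N & Phi s (dc a f) (b :: t) = N%:R * f X.
  apply: IHs => w Hw Hlt; apply: H; first by rewrite /= Hw.
  rewrite EM; apply: lexlt_le_trans (lexmax_l _ _).
  by rewrite /X lexlt_cons.
have [N2 N2p E2] : exists2 N, (0 < N)%N & Phi (a :: s) (dc b f) t = N%:R * f Y.
  apply: IHt => w Hw Hlt; apply: H; first by rewrite /= Hw addnS.
  rewrite EM; apply: lexlt_le_trans (lexmax_r _ _).
  by rewrite /Y lexlt_cons.
rewrite Phi_cons E1 E2 EM /lexmax.
case: (boolP (lexle X Y)) => HXY.
  case: (eqVneq X Y) => [EXY|NXY].
    by exists (N1 + N2)%N; [rewrite addn_gt0 N1p | rewrite EXY natrD mulrDl].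
  exists N2 => //; rewrite (H X) ?mulr0 ?add0r //.
  by rewrite EM /lexmax HXY /lexlt HXY NXY.
exists N1 => //; rewrite (H Y) ?mulr0 ?addr0 //.
by rewrite EM /lexmax (negbTE HXY) lexltNge.
Qed.

Lemma top_lyndon f d a : in_L2 f -> istop f d a ->
  forall i, (0 < i < d)%N -> lexlt a (drop i a).
Proof.
move=> Lf [Sa fa Hbig Hlow] i /andP[i0 id].
rewrite lexltNge; apply/negP => Hle.
set L := [seq drop j a | j <- iota 1 d.-1].
have memL : forall j, (0 < j < d)%N -> drop j a \in L.
  move=> j /andP[j0 jd]; apply/mapP; exists j => //.
  by rewrite mem_iota j0 /= add1n prednK // (ltn_trans j0 jd).
have LnE : L != [::] by apply/eqP => E; move: (memL i); rewrite E i0 id => /(_ isT).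
have [m mL Hm] := exists_lexmin LnE.
move/mapP: mL => [k]; rewrite mem_iota add1n prednK; last exact: ltn_trans i0 id.
move=> /andP[k0 kd] Em; subst m.
set s := take k a; set t := drop k a.
have sz_s : size s = k by rewrite size_take Sa kd.
have sz_t : size t = (d - k)%N by rewrite size_drop Sa.
have st_a : s ++ t = a by rewrite cat_take_drop.
have tle_a : lexle t a.
  apply: lexle_trans (Hm _ (memL i _)) Hle; by rewrite i0 id.
have D : Dcond s t.
  move=> j Hj; rewrite sz_s in Hj.
  have Hsg : drop j s ++ t = drop j a.
    by rewrite -{1}st_a drop_cat sz_s Hj.
  have Ht : lexle t (drop j s ++ t).
    rewrite Hsg; case: j Hj {Hsg} => [|j] Hj; first by rewrite drop0.
    apply: Hm; apply: memL; by rewrite /= (ltn_trans Hj kd).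
  case: (LX Ht) => [[rho Erho Hrho]|] //.
  exfalso.
  have Hrt : lexle rho t.
    by move: Ht; rewrite {1}Erho lexle_cat.
  have rhoL : rho = drop (k + size (drop j s)) a.
    by rewrite addnC -drop_drop -/t {1}Erho drop_size_cat.
  have sz_sg : (0 < size (drop j s))%N by rewrite size_drop sz_s subn_gt0.
  have szr : size t = (size (drop j s) + size rho)%N by rewrite Erho size_cat.
  have Htr : lexle t rho.
    rewrite rhoL; apply: Hm; apply: memL.
    rewrite addn_gt0 k0 /=.
    have Hr : (size rho > 0)%N by rewrite lt0n size_eq0.
    move: szr; rewrite sz_t => szr; lia.
  have Ert := lexle_anti Hrt Htr.
  have : size rho = size t by rewrite Ert.
  lia.
have EM : M s t = a by rewrite M_greedy.
have [N Np EN] : exists2 N, (0 < N)%N & Phi s f t = N%:R * f (M s t).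
  apply: Phi_max => w; rewrite EM sz_s sz_t subnKC; last exact: ltnW.
  exact: Hlow.
have : Phi s f t = 0.
  apply: Ree => //; rewrite -size_eq0.
    by rewrite sz_s; move: k0; case: (k).
  by rewrite sz_t subn_eq0 -ltnNge.
rewrite EN EM => /eqP; rewrite mulf_eq0 (negbTE fa) orbF.
by move/pcharf0P: charK0 => ->; move/eqP => N0; rewrite N0 in Np.
Qed.

End Top.


Definition lyn (a : seq bool) := forall i, (0 < i < size a)%N -> lexlt a (drop i a).

Lemma lyn_noncomm_aux a b : a != [::] -> lyn b -> (size a < size b)%N -> a ++ b != b ++ a.
Proof.
move=> an lb sab; apply/eqP => E.
have Hpre : take (size a) b = a.
  by have := congr1 (take (size a)) E; rewrite take_size_cat // take_cat sab.
have Hsuf : drop (size b - size a) b = a.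
  have := congr1 (drop (size b)) E.
  by rewrite drop_cat ltnNge (ltnW sab) /= drop_size_cat.
have sa0 : (0 < size a)%N by rewrite lt0n size_eq0.
have := lb (size b - size a)%N; rewrite Hsuf.
have -> : (0 < size b - size a < size b)%N by apply/andP; split; lia.
move=> /(_ isT); rewrite lexltNge -{1}Hpre.
by rewrite -{2}(cat_take_drop (size a) b) lexle_prefix.
Qed.

Lemma lyn_noncomm a b : a != [::] -> b != [::] -> lyn a -> lyn b -> a != b ->
  a ++ b != b ++ a.
Proof.
move=> an bn la lb nab.
case: (ltngtP (size a) (size b)) => H.
- exact: lyn_noncomm_aux.
- by rewrite eq_sym; apply: lyn_noncomm_aux.
- apply/eqP => E; move/eqP: nab; apply.
  by have := congr1 (take (size a)) E; rewrite take_size_cat // H take_size_cat.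
Qed.

Lemma catr_inj (p u v : seq bool) : p ++ u = p ++ v -> u = v.
Proof. by elim: p => //= c p IH [] /IH. Qed.

Definition ev (a b : seq bool) (m : seq bool) :=
  flatten [seq (if c then b else a) | c <- m].

Lemma ev_cons a b c m : ev a b (c :: m) = (if c then b else a) ++ ev a b m.
Proof. by []. Qed.

Lemma ev_negb a b m : ev b a (map negb m) = ev a b m.
Proof. by elim: m => //= c m IH; rewrite ev_cons IH; case: c. Qed.

Definition sigm (m : seq bool) :=
  flatten [seq (if c then [:: false; true] else [:: false]) | c <- m].

Lemma ev_sig a b' m : ev a (a ++ b') m = ev a b' (sigm m).
Proof.
elim: m => // c m IH; rewrite ev_cons IH.
by case: c => //=; rewrite /ev /= -catA.
Qed.

Lemma sig_head m m' : sigm m != true :: m'.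
Proof. by case: m => // c m; case: c. Qed.

Lemma ev_nil a b m : a != [::] -> b != [::] -> (ev a b m == [::]) = (m == [::]).
Proof.
move=> an bn; case: m => // c m; rewrite ev_cons /=.
by apply/negbTE; rewrite -size_eq0 size_cat addn_eq0 negb_and size_eq0; case: c; rewrite ?an ?bn.
Qed.

Lemma code n : forall a b, (size a + size b <= n)%N -> a != [::] -> b != [::] ->
  a ++ b != b ++ a -> forall m1 m2, ev a b m1 = ev a b m2 -> m1 = m2.
Proof.
elim: n => [|n IHn] a b Hn an bn nc.
  by move: Hn an; rewrite leqn0 addn_eq0 => /andP[/nilP ->].
have step : forall a b P Q, (size a + size b <= n.+1)%N -> a != [::] -> b != [::] ->
    a ++ b != b ++ a -> (size a <= size b)%N ->
    (exists m1, P = ev a b m1) -> (exists m2, Q = ev a b m2) -> a ++ P = b ++ Q -> False.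
  move=> x y P Q Hs xn yn ncxy sxy [m1 ->] [m2 ->] E.
  have Hpre : take (size x) y = x.
    have := congr1 (take (size x)) E; rewrite take_size_cat // take_cat.
    case: ltnP => // H; have -> : size x = size y by apply/eqP; rewrite eqn_leq sxy H.
    by rewrite subnn take0 cats0 take_size.
  set y' := drop (size x) y.
  have Ey : y = x ++ y' by rewrite -{1}(cat_take_drop (size x) y) Hpre.
  clearbody y'.
  have y'n : y' != [::].
    apply/eqP => y'0; apply: (negP ncxy); apply/eqP; by rewrite Ey y'0 cats0.
  have nc2 : x ++ y' != y' ++ x.
    apply/eqP => E2; apply: (negP ncxy); apply/eqP; by rewrite Ey -catA E2.
  have sx0 : (0 < size x)%N by rewrite lt0n size_eq0.
  have Hs2 : (size x + size y' <= n)%N.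
    have Hsz : size y = (size x + size y')%N by rewrite Ey size_cat.
    lia.
  move: E; rewrite Ey -catA => /catr_inj; rewrite !ev_sig.
  rewrite -(ev_cons x y' true (sigm m2)) => /(IHn _ _ Hs2 xn y'n nc2) E3.
  by move/eqP: (sig_head m1 (sigm m2)); apply.
elim=> [|c1 m1 IHm] [|c2 m2] //.
- by move=> /esym /eqP; rewrite ev_nil.
- by move=> /eqP; rewrite ev_nil.
rewrite !ev_cons.
case: (eqVneq c1 c2) => [<-|Nc].
  by move=> /catr_inj /IHm ->.
have Hn' : (size a + size b <= n.+1)%N by [].
case: c1 c2 Nc => [] [] // _ E.
- case: (leqP (size a) (size b)) => H.
    by exfalso; apply: (step a b _ _ Hn' an bn nc H _ _ (esym E)); [exists m2|exists m1].
  exfalso; apply: (step b a _ _ _ bn an _ (ltnW H) _ _ E).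
  + by rewrite addnC.
  + by rewrite eq_sym.
  + by exists (map negb m1); rewrite ev_negb.
  + by exists (map negb m2); rewrite ev_negb.
- case: (leqP (size a) (size b)) => H.
    by exfalso; apply: (step a b _ _ Hn' an bn nc H _ _ E); [exists m1|exists m2].
  exfalso; apply: (step b a _ _ _ bn an _ (ltnW H) _ _ (esym E)).
  + by rewrite addnC.
  + by rewrite eq_sym.
  + by exists (map negb m2); rewrite ev_negb.
  + by exists (map negb m1); rewrite ev_negb.
Qed.


(* top order: tle V W means W is at least as high as V *)
Definition tle (V W : seq bool) :=
  (size V < size W)%N || ((size V == size W) && lexle W V).

Lemma tle_refl V : tle V V.
Proof. by rewrite /tle eqxx lexle_refl orbT. Qed.

Lemma tle_trans U V W : tle U V -> tle V W -> tle U W.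
Proof.
rewrite /tle => /orP[H1|/andP[/eqP E1 L1]] /orP[H2|/andP[/eqP E2 L2]].
- by rewrite (ltn_trans H1 H2).
- by rewrite -E2 H1.
- by rewrite E1 H2.
- by rewrite E1 E2 eqxx (lexle_trans L2 L1) orbT.
Qed.

Lemma tle_total V W : tle V W || tle W V.
Proof.
rewrite /tle; case: (ltngtP (size V) (size W)) => //= E.
by rewrite orbC lexle_total.
Qed.

Lemma tle_anti V W : tle V W -> tle W V -> V = W.
Proof.
rewrite /tle => /orP[H1|/andP[/eqP E1 L1]] /orP[H2|/andP[/eqP E2 L2]].
- by move: (ltn_trans H1 H2); rewrite ltnn.
- by move: H1; rewrite E2 ltnn.
- by move: H2; rewrite E1 ltnn.
- exact: lexle_anti.
Qed.

Fixpoint allw (n : nat) : seq (seq bool) :=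
  if n is n'.+1 then map (cons false) (allw n') ++ map (cons true) (allw n') else [:: [::]].

Lemma mem_allw n w : (w \in allw n) = (size w == n).
Proof.
elim: n w => [|n IH] w; first by case: w.
case: w => [|c w] /=; rewrite mem_cat.
  by apply/negbTE; rewrite negb_or; apply/andP; split; apply/mapP => -[].
have inj : forall b, injective (@cons bool b) by move=> b x y [].
have F1 : (true :: w \in map (cons false) (allw n)) = false by apply/mapP => -[].
have F2 : (false :: w \in map (cons true) (allw n)) = false by apply/mapP => -[].
by case: c; rewrite ?F1 ?F2 /= ?orbF mem_map // IH.
Qed.

Lemma exists_tlemax (T : eqType) (S : seq T) (kap : T -> seq bool) : S != [::] ->
  exists2 m, m \in S & forall m', m' \in S -> tle (kap m') (kap m).
Proof.
elim: S => [|m0 S IH] // _.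
case: (eqVneq S [::]) => [->|NS].
  exists m0; first by rewrite inE eqxx.
  by move=> m'; rewrite inE => /eqP ->; apply: tle_refl.
have [m mS Hm] := IH NS.
case: (boolP (tle (kap m) (kap m0))) => H.
  exists m0; first by rewrite inE eqxx.
  move=> m'; rewrite inE => /orP[/eqP ->|m'S]; first exact: tle_refl.
  exact: tle_trans (Hm _ m'S) H.
exists m; first by rewrite inE mS orbT.
move=> m'; rewrite inE => /orP[/eqP ->|m'S]; last exact: Hm.
by have := tle_total (kap m0) (kap m); rewrite (negbTE H) orbF.
Qed.

Section Tops.
Variable K : fieldType.
Implicit Types f g h : ncser K.

Lemma istop_above f d a W : istop f d a -> ~~ tle W a -> f W = 0.
Proof.
move=> [Sa _ Hbig Hlow] H; case: (ltngtP d (size W)) => Hs.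
- exact: Hbig.
- by move: H; rewrite /tle Sa Hs.
- apply: Hlow => //; rewrite lexltNge.
  by move: H; rewrite /tle Sa Hs ltnn eqxx.
Qed.

Lemma istop_le f d a W : istop f d a -> f W != 0 -> tle W a.
Proof. by move=> Ht; apply: contraR => H; rewrite (istop_above Ht H). Qed.

Lemma istop_uniq f d a d' a' : istop f d a -> istop f d' a' -> d = d' /\ a = a'.
Proof.
move=> H1 H2; have E : a = a'.
  apply: tle_anti; [apply: istop_le H2 _ | apply: istop_le H1 _].
    by case: H1.
  by case: H2.
by case: H1 H2 => S1 _ _ _ [S2 _ _ _]; split => //; rewrite -S1 -S2 E.
Qed.

Lemma top_exists f N : (forall w, (N < size w)%N -> f w = 0) -> (exists w, f w != 0) ->
  exists d a, istop f d a.
Proof.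
move=> HN [w0 Hw0].
pose P := fun n => has (fun w => f w != 0) (allw n).
have exP : exists n, P n.
  exists (size w0); apply/hasP; exists w0 => //; by rewrite mem_allw.
have ubP : forall n, P n -> (n <= N)%N.
  move=> n /hasP[w]; rewrite mem_allw => /eqP <- Hw; rewrite leqNgt.
  by apply/negP => /HN; apply/eqP.
case: (ex_maxnP exP ubP) => d Pd Hmax.
set L := [seq w <- allw d | f w != 0].
have LnE : L != [::] by rewrite -size_eq0 size_filter -lt0n -has_count.
have [a aL Ha] := exists_lexmin LnE.
move: aL; rewrite mem_filter mem_allw => /andP[fa /eqP Sa].
exists d, a; split => //.
- move=> w Hw; apply/eqP; apply: contraT => fw.
  have : P (size w) by apply/hasP; exists w => //; rewrite mem_allw.
  by move/Hmax; rewrite leqNgt Hw.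
- move=> w Sw; rewrite lexltNge => Hl; apply/eqP; apply: contraT => fw.
  by move: Hl; rewrite Ha // mem_filter fw mem_allw Sw eqxx.
Qed.

Lemma ncone_top : istop (ncone K) 0 [::].
Proof.
split => //; first by rewrite /ncone eqxx oner_neq0.
- by move=> w; case: w.
- by move=> w; case: w.
Qed.

Lemma sum_single n (F : 'I_n -> K) (i0 : 'I_n) : (forall i, i != i0 -> F i = 0) ->
  \sum_(i < n) F i = F i0.
Proof.
move=> H; rewrite (bigD1 i0) //= big1 ?addr0 // => i /andP[_]; exact: H.
Qed.

Lemma lexlt_cat_split p q a b : size p = size a -> lexlt (p ++ q) (a ++ b) ->
  lexlt p a \/ (p = a /\ lexlt q b).
Proof.
elim: p a => [|c p IH] [|e a] //=.
- by move=> _ H; right.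
- case=> Sp; case: (eqVneq c e) => [<-|Nce].
    rewrite !lexlt_cons => /(IH _ Sp) [H|[-> H]]; first by left.
    by right.
  by move=> /lexlt_le; rewrite !(lexle_cons_lt _ _ Nce) => H; left; rewrite /lexlt (lexle_cons_lt _ _ Nce) H /= eqseq_cons (negbTE Nce).
Qed.

Lemma top_mul f g d1 d2 a b : istop f d1 a -> istop g d2 b ->
  istop (ncmul f g) (d1 + d2) (a ++ b) /\ ncmul f g (a ++ b) = f a * g b.
Proof.
move=> Hf Hg; case: (Hf) => Sa fa Hf1 Hf2; case: (Hg) => Sb gb Hg1 Hg2.
have zero : forall w, size w = (d1 + d2)%N -> forall i : 'I_(size w).+1, (i : nat) != d1 ->
    f (take i w) * g (drop i w) = 0.
  move=> w Sw i Hi; have Hi' : (i <= size w)%N by rewrite -ltnS.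
  case: (ltngtP i d1) Hi => // Hl _.
    by rewrite (Hg1 (drop i w)) ?mulr0 // size_drop; lia.
  by rewrite (Hf1 (take i w)) ?mul0r // size_take; case: ifP => _; lia.
have Eab : ncmul f g (a ++ b) = f a * g b.
  have Sab : size (a ++ b) = (d1 + d2)%N by rewrite size_cat Sa Sb.
  have Hd1 : (d1 < (size (a ++ b)).+1)%N by rewrite Sab ltnS leq_addr.
  rewrite /ncmul (sum_single (i0 := Ordinal Hd1)) /=; last first.
    by move=> i Hi; apply: zero => //; apply: contra Hi => /eqP Hi; apply/eqP; apply: val_inj.
  by rewrite -Sa take_size_cat // drop_size_cat.
split => //; split.
- by rewrite size_cat Sa Sb.
- by rewrite Eab mulf_neq0.
- move=> w Hw; rewrite /ncmul big1 // => i _.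
  have Hi' : (i <= size w)%N by rewrite -ltnS.
  case: (leqP i d1) => Hl.
    by rewrite (Hg1 (drop i w)) ?mulr0 // size_drop; lia.
  by rewrite (Hf1 (take i w)) ?mul0r // size_take; case: ifP => _; lia.
- move=> w Sw Hlt; have Hd1 : (d1 < (size w).+1)%N by rewrite Sw ltnS leq_addr.
  rewrite /ncmul (sum_single (i0 := Ordinal Hd1)) /=; last first.
    by move=> i Hi; apply: zero => //; apply: contra Hi => /eqP Hi; apply/eqP; apply: val_inj.
  have St : size (take d1 w) = size a by rewrite Sa size_takel // Sw leq_addr.
  move: Hlt; rewrite -{1}(cat_take_drop d1 w) => /(lexlt_cat_split St) [H|[_ H]].
    by rewrite (Hf2 _ _ H) ?mul0r // St.
  rewrite (Hg2 _ _ H) ?mulr0 //; by rewrite size_drop; lia.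
Qed.

Variables (u v : ncser K).

Definition mono (m : seq bool) : ncser K :=
  foldr (fun c acc => ncmul (if c then v else u) acc) (@ncone K) m.

End Tops.


Section Alg.
Variable K : fieldType.
Implicit Types f g h u v : ncser K.

Lemma ncmul_one_l f : ncmul (ncone K) f = f.
Proof.
apply: functional_extensionality => w; elim: w f => [|c w IH] f.
  by rewrite ncmul_nil /ncone eqxx mul1r.
have -> : ncmul (ncone K) f (c :: w) = dc c (ncmul (ncone K) f) w by [].
rewrite dc_mul /ncadd /ncscale /ncone eqxx mul1r.
rewrite /ncmul big1 ?add0r // => i _; by rewrite /dc /= mul0r.
Qed.

Lemma ncmul_one_r f : ncmul f (ncone K) = f.
Proof.
apply: functional_extensionality => w; elim: w f => [|c w IH] f.
  by rewrite ncmul_nil /ncone eqxx mulr1.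
have -> : ncmul f (ncone K) (c :: w) = dc c (ncmul f (ncone K)) w by [].
by rewrite dc_mul /ncadd /ncscale IH /dc /ncone /= mulr0 addr0.
Qed.

Inductive in_A (u v : ncser K) : ncser K -> Prop :=
  | A_u : in_A u v u
  | A_v : in_A u v v
  | A_add f g : in_A u v f -> in_A u v g -> in_A u v (ncadd f g)
  | A_scale a f : in_A u v f -> in_A u v (ncscale a f)
  | A_mul f g : in_A u v f -> in_A u v g -> in_A u v (ncmul f g).

Lemma mono_nil u v : mono u v [::] = ncone K. Proof. by []. Qed.
Lemma mono_cons u v c m : mono u v (c :: m) = ncmul (if c then v else u) (mono u v m).
Proof. by []. Qed.

Lemma mono_cat u v m1 m2 : mono u v (m1 ++ m2) = ncmul (mono u v m1) (mono u v m2).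
Proof.
elim: m1 => [|c m1 IH]; first by rewrite mono_nil ncmul_one_l.
by rewrite cat_cons !mono_cons IH ncmul_assoc.
Qed.

Definition rep u v (l : seq (K * seq bool)) f :=
  forall W, f W = \sum_(p <- l) p.1 * mono u v p.2 W.

Lemma rep_mul u v l1 l2 f g : rep u v l1 f -> rep u v l2 g ->
  rep u v [seq (p.1 * q.1, p.2 ++ q.2) | p <- l1, q <- l2] (ncmul f g).
Proof.
rewrite /rep => Hf Hg W; rewrite big_allpairs_dep /=.
rewrite {1}/ncmul.
under [in LHS]eq_bigr => i _ do rewrite Hf Hg mulr_suml.
rewrite exchange_big /=; apply: eq_bigr => p _.
under eq_bigr => i _ do rewrite mulr_sumr.
rewrite exchange_big /=; apply: eq_bigr => q _.
rewrite mono_cat /ncmul mulr_sumr; apply: eq_bigr => i _.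
by rewrite mulrACA.
Qed.

Lemma rep_exists u v f : in_A u v f -> exists l, rep u v l f.
Proof.
elim=> {f} [||f g _ [l1 H1] _ [l2 H2]|a f _ [l H]|f g _ [l1 H1] _ [l2 H2]].
- exists [:: (1, [:: false])] => W.
  by rewrite big_seq1 (mono_cons u v false [::]) mono_nil ncmul_one_r mul1r.
- exists [:: (1, [:: true])] => W.
  by rewrite big_seq1 (mono_cons u v true [::]) mono_nil ncmul_one_r mul1r.
- by exists (l1 ++ l2) => W; rewrite big_cat /= /ncadd H1 H2.
- exists [seq (a * p.1, p.2) | p <- l] => W.
  by rewrite big_map /ncscale H mulr_sumr; apply: eq_bigr => p _; rewrite mulrA.
- by exists [seq (p.1 * q.1, p.2 ++ q.2) | p <- l1, q <- l2]; apply: rep_mul.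
Qed.

Lemma mono_top u v du dv a b m : istop u du a -> istop v dv b ->
  istop (mono u v m) (size (ev a b m)) (ev a b m).
Proof.
move=> Hu Hv; elim: m => [|c m IH]; first exact: ncone_top.
rewrite mono_cons ev_cons.
have Hc : istop (if c then v else u) (size (if c then b else a)) (if c then b else a).
  by case: c; [case: Hv => S ? ? ?; rewrite S | case: Hu => S ? ? ?; rewrite S].
by have [H _] := top_mul Hc IH; rewrite size_cat.
Qed.

Lemma sum_partition (l : seq (K * seq bool)) (G : K * seq bool -> K) :
  \sum_(p <- l) G p = \sum_(m <- undup (map snd l)) \sum_(p <- l | p.2 == m) G p.
Proof.
under [RHS]eq_bigr => m _ do rewrite big_mkcond /=.
rewrite exchange_big /=; apply: eq_big_seq => p pl.
rewrite (bigD1_seq p.2) ?undup_uniq ?mem_undup ?map_f //= eqxx big1 ?addr0 //.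
by move=> m /negPf; rewrite eq_sym => ->.
Qed.

Lemma lw_sum u v du dv a b (l : seq (K * seq bool)) F :
  istop u du a -> istop v dv b ->
  (forall m1 m2, ev a b m1 = ev a b m2 -> m1 = m2) ->
  rep u v l F -> (exists W, F W != 0) ->
  exists m, istop F (size (ev a b m)) (ev a b m).
Proof.
move=> Hu Hv inj HF [W0 FW0].
set ms := undup (map snd l).
pose c m := \sum_(p <- l | p.2 == m) p.1.
have HF2 : forall W, F W = \sum_(m <- [seq m <- ms | c m != 0]) c m * mono u v m W.
  move=> W; rewrite HF sum_partition big_filter [RHS]big_mkcond /=.
  apply: eq_bigr => m _.
  have -> : \sum_(p <- l | p.2 == m) p.1 * mono u v p.2 W = c m * mono u v m W.
    by rewrite /c mulr_suml; apply: eq_bigr => p /eqP ->.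
  by case: ifP => // /negbFE /eqP ->; rewrite mul0r.
set S := [seq m <- ms | c m != 0] in HF2.
have SnE : S != [::].
  apply/eqP => S0; move: FW0; rewrite HF2 S0 big_nil; by rewrite eqxx.
have [ms0 ms0S Hmax] := exists_tlemax (ev a b) SnE.
set T := ev a b ms0.
have Suniq : uniq S by rewrite filter_uniq // undup_uniq.
have cms0 : c ms0 != 0 by move: ms0S; rewrite mem_filter => /andP[].
have above : forall W, ~~ tle W T -> F W = 0.
  move=> W HW; rewrite HF2 big1_seq // => m mS.
  rewrite (istop_above (mono_top m Hu Hv)) ?mulr0 //.
  by apply: contra HW => H; apply: tle_trans H (Hmax _ mS).
exists ms0; split => //.
- have HmT := mono_top ms0 Hu Hv; case: (HmT) => _ Hnz _ _.
  rewrite HF2 (bigD1_seq ms0) //= big1_seq ?addr0; first by rewrite mulf_neq0.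
  move=> m /andP[Nm mS]; rewrite (istop_above (mono_top m Hu Hv)) ?mulr0 //.
  apply/negP => H; have H2 := Hmax _ mS.
  have E := tle_anti H H2; move: Nm; by rewrite (inj _ _ E) eqxx.
- by move=> w Hw; apply: above; rewrite /tle ltnNge (ltnW Hw) /= (gtn_eqF Hw).
- move=> w Sw Hl; apply: above; rewrite /tle Sw ltnn eqxx /=; by rewrite -lexltNge.
Qed.

End Alg.


Section Key.
Variable K : fieldType.
Hypothesis charK0 : [pchar K] =i pred0.
Implicit Types f g h u v : ncser K.

Lemma ncmul_deg f g N1 N2 : (forall w, (N1 < size w)%N -> f w = 0) ->
  (forall w, (N2 < size w)%N -> g w = 0) ->
  forall w, (N1 + N2 < size w)%N -> ncmul f g w = 0.
Proof.
move=> Hf Hg w Hw; rewrite /ncmul big1 // => i _.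
have Hi' : (i <= size w)%N by rewrite -ltnS.
case: (leqP i N1) => Hl.
  by rewrite (Hg (drop i w)) ?mulr0 // size_drop; lia.
by rewrite (Hf (take i w)) ?mul0r // size_take; case: ifP => _; lia.
Qed.

Lemma L2_deg f : in_L2 f -> exists N, forall w, (N < size w)%N -> f w = 0.
Proof.
elim=> {f} [||f g _ [N1 H1] _ [N2 H2]|a f _ [N H]|f g _ [N1 H1] _ [N2 H2]].
- exists 1%N => w Hw; rewrite /ncx; case: eqP => // E; by move: Hw; rewrite E.
- exists 1%N => w Hw; rewrite /ncy; case: eqP => // E; by move: Hw; rewrite E.
- exists (maxn N1 N2) => w; rewrite gtn_max => /andP[h1 h2].
  by rewrite /ncadd H1 // H2 // addr0.
- by exists N => w Hw; rewrite /ncscale H // mulr0.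
- exists (N1 + N2)%N => w Hw; rewrite /nclie.
  rewrite (ncmul_deg H1 H2) // (ncmul_deg H2 H1) ?subr0 //; by rewrite addnC.
Qed.

Lemma linpart u v f : in_A u v f -> u [::] = 0 -> v [::] = 0 ->
  f [::] = 0 /\ exists al be, forall c, f [:: c] = al * u [:: c] + be * v [:: c].
Proof.
move=> HA u0 v0; elim: HA => {f} [||f g _ [f0 [a1 [b1 H1]]] _ [g0 [a2 [b2 H2]]]|a f _ [f0 [a1 [b1 H1]]]|f g _ [f0 _] _ [g0 _]].
- by split => //; exists 1, 0 => c; rewrite mul1r mul0r addr0.
- by split => //; exists 0, 1 => c; rewrite mul1r mul0r add0r.
- split; first by rewrite /ncadd f0 g0 addr0.
  exists (a1 + a2), (b1 + b2) => c; rewrite /ncadd H1 H2; ring.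
- split; first by rewrite /ncscale f0 mulr0.
  exists (a * a1), (a * b1) => c; rewrite /ncscale H1; ring.
- split; first by rewrite ncmul_nil f0 mul0r.
  exists 0, 0 => c; rewrite /ncmul !big_ord_recl big_ord0 /= f0 g0; ring.
Qed.

Lemma det_nz u v : in_A u v (ncx K) -> in_A u v (ncy K) -> u [::] = 0 -> v [::] = 0 ->
  u [:: false] * v [:: true] - u [:: true] * v [:: false] != 0.
Proof.
move=> Hx Hy u0 v0.
have [_ [al [be Hab]]] := linpart Hx u0 v0.
have [_ [ga [de Hgd]]] := linpart Hy u0 v0.
have e1 := Hab false; have e2 := Hab true; have e3 := Hgd false; have e4 := Hgd true.
rewrite /ncx /ncy /= in e1 e2 e3 e4.
apply/eqP => D.
have : (al * de - be * ga) * (u [:: false] * v [:: true] - u [:: true] * v [:: false]) = 1.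
  transitivity ((al * u [:: false] + be * v [:: false]) * (ga * u [:: true] + de * v [:: true])
    - (al * u [:: true] + be * v [:: true]) * (ga * u [:: false] + de * v [:: false])).
    ring.
  by rewrite -e1 -e2 -e3 -e4; ring.
by rewrite D mulr0 => /eqP; rewrite eq_sym oner_eq0.
Qed.

Lemma ncx_top : istop (ncx K) 1 [:: false].
Proof.
split => //; first by rewrite /ncx eqxx oner_neq0.
- by move=> w Hw; rewrite /ncx; case: eqP => // E; move: Hw; rewrite E.
- by move=> w _ /andP[_ /negbTE]; rewrite /ncx => ->.
Qed.

Lemma ncy_top : istop (ncy K) 1 [:: true].
Proof.
split => //; first by rewrite /ncy eqxx oner_neq0.
- by move=> w Hw; rewrite /ncy; case: eqP => // E; move: Hw; rewrite E.
- by move=> w _ /andP[_ /negbTE]; rewrite /ncy => ->.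
Qed.

Lemma ev_single a b m c0 : a != [::] -> b != [::] -> ev a b m = [:: c0] ->
  a = [:: c0] \/ b = [:: c0].
Proof.
move=> an bn; case: m => [|c m] //; rewrite ev_cons.
have : (if c then b else a) != [::] by case: c.
case E: (if c then b else a) => [|d r] // _ /=.
case=> Ed Er0; have Er : r = [::] by move: Er0; case: (r).
by case: c E => E; [right|left]; rewrite E Ed Er.
Qed.

Lemma top_nonnil f d a : in_L2 f -> istop f d a -> a != [::].
Proof.
move=> Lf [_ fa _ _]; apply: contra fa => /eqP ->; by rewrite L2_nil.
Qed.

Lemma distinct_case u v du dv a b : in_L2 u -> in_L2 v -> istop u du a -> istop v dv b ->
  a != b -> in_A u v (ncx K) -> in_A u v (ncy K) -> du = 1%N /\ dv = 1%N.
Proof.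
move=> Lu Lv Hu Hv nab Ax Ay.
have an := top_nonnil Lu Hu; have bn := top_nonnil Lv Hv.
have la : lyn a by move=> i; case: (Hu) => Sa _ _ _; rewrite Sa; apply: (top_lyndon charK0 Lu Hu).
have lb : lyn b by move=> i; case: (Hv) => Sb _ _ _; rewrite Sb; apply: (top_lyndon charK0 Lv Hv).
have nc := lyn_noncomm an bn la lb nab.
have inj := code (leqnn _) an bn nc.
have key : forall c0 (F : ncser K), istop F 1 [:: c0] -> in_A u v F -> a = [:: c0] \/ b = [:: c0].
  move=> c0 F HF AF; have [l Hl] := rep_exists AF.
  have [m Hm] := lw_sum Hu Hv inj Hl (ex_intro _ [:: c0] (let: And4 _ h _ _ := HF in h)).
  have [_ E] := istop_uniq Hm HF.
  exact: ev_single an bn E.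
have Hx := key false _ ncx_top Ax; have Hy := key true _ ncy_top Ay.
case: (Hu) => Sa _ _ _; case: (Hv) => Sb _ _ _.
case: Hx => Ea; case: Hy => Eb.
- by rewrite Ea in Eb; case: Eb.
- by rewrite -Sa -Sb Ea Eb.
- by rewrite -Sa -Sb Ea Eb.
- by rewrite Ea in Eb; case: Eb.
Qed.

Lemma A_sub u v v' c f : v = ncadd (ncscale c u) v' -> in_A u v f -> in_A u v' f.
Proof.
move=> Ev; elim=> {f} [|||a f _ IH|f g _ IH1 _ IH2].
- exact: A_u.
- rewrite Ev; apply: A_add; [apply: A_scale; exact: A_u | exact: A_v].
- by move=> f g _ IH1 _ IH2; apply: A_add.
- exact: A_scale.
- exact: A_mul.
Qed.

Lemma nonzero_of_det u v : u [:: false] * v [:: true] - u [:: true] * v [:: false] != 0 ->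
  exists W, u W != 0.
Proof.
move=> D; case: (eqVneq (u [:: false]) 0) => [E1|N1]; last by exists [:: false].
case: (eqVneq (u [:: true]) 0) => [E2|N2]; last by exists [:: true].
by move: D; rewrite E1 E2 !mul0r subrr eqxx.
Qed.

Lemma key_linear u v : in_L2 u -> in_L2 v -> in_A u v (ncx K) -> in_A u v (ncy K) ->
  forall W, (1 < size W)%N -> u W = 0 /\ v W = 0.
Proof.
move=> Lu Lv Ax Ay.
have u0 := L2_nil Lu; have v0 := L2_nil Lv.
have D := det_nz Ax Ay u0 v0.
have [Nu Hu'] := L2_deg Lu; have [Nv Hv'] := L2_deg Lv.
have [du [a Hu]] := top_exists Hu' (nonzero_of_det D).
have [dv [b Hv]] : exists dv b, istop v dv b.
  apply: (top_exists Hv'); apply: (@nonzero_of_det v u).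
  apply: contra D => /eqP H; apply/eqP.
  transitivity (-(v [:: false] * u [:: true] - v [:: true] * u [:: false])); first ring.
  by rewrite H oppr0.
case: (eqVneq a b) => [Eab|Nab]; last first.
  have [Hdu Hdv] := distinct_case Lu Lv Hu Hv Nab Ax Ay.
  move=> W HW; case: Hu => _ _ H1 _; case: Hv => _ _ H2 _.
  rewrite Hdu in H1; rewrite Hdv in H2; split; [exact: H1 | exact: H2].
subst b.
have ua : u a != 0 by case: Hu.
set c := v a / u a.
set v' := ncadd (ncscale (- c) u) v.
have Lv' : in_L2 v' by apply: L2_add => //; apply: L2_scale.
have Ev : v = ncadd (ncscale c u) v'.
  by apply: functional_extensionality => w; rewrite /v' /ncadd /ncscale; ring.
have Ax' := A_sub Ev Ax; have Ay' := A_sub Ev Ay.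
have D' := det_nz Ax' Ay' u0 (L2_nil Lv').
have [Nv'' Hv''] := L2_deg Lv'.
have [dv' [b' Hv2]] : exists dv b, istop v' dv b.
  apply: (top_exists Hv''); apply: (@nonzero_of_det v' u).
  apply: contra D' => /eqP H; apply/eqP.
  transitivity (-(v' [:: false] * u [:: true] - v' [:: true] * u [:: false])); first ring.
  by rewrite H oppr0.
have Nab : a != b'.
  apply/eqP => Eab; case: Hv2 => _; rewrite -Eab /v' /ncadd /ncscale /c.
  by rewrite mulNr divfK // addNr eqxx.
have [Hdu Hdv] := distinct_case Lu Lv' Hu Hv2 Nab Ax' Ay'.
move=> W HW; case: Hu => _ _ H1 _; case: Hv2 => _ _ H2 _.
rewrite Hdu in H1; rewrite Hdv in H2.
split; first exact: H1.
by rewrite Ev /ncadd /ncscale H1 // H2 // mulr0 addr0.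
Qed.

End Key.


Section Final.
Variable K : fieldType.
Implicit Types f g h u v : ncser K.

Lemma ncswap_mul f g : ncswap (ncmul f g) = ncmul (ncswap f) (ncswap g).
Proof.
apply: functional_extensionality => w; rewrite /ncswap /ncmul.
rewrite size_map; apply: eq_bigr => i _.
by rewrite map_take map_drop.
Qed.

Lemma ncswap_lie f g : ncswap (nclie f g) = nclie (ncswap f) (ncswap g).
Proof.
apply: functional_extensionality => w.
by rewrite /nclie -ncswap_mul -ncswap_mul.
Qed.

Lemma ncswap_add f g : ncswap (ncadd f g) = ncadd (ncswap f) (ncswap g).
Proof. by []. Qed.
Lemma ncswap_scale a f : ncswap (ncscale a f) = ncscale a (ncswap f).
Proof. by []. Qed.

Lemma map_negb1 w c : (map negb w == [:: c]) = (w == [:: ~~ c]).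
Proof. by case: w => [|d [|e w]] //=; case: c; case: d. Qed.

Lemma ncswap_x : ncswap (ncx K) = ncy K.
Proof. by apply: functional_extensionality => w; rewrite /ncswap /ncx /ncy map_negb1. Qed.
Lemma ncswap_y : ncswap (ncy K) = ncx K.
Proof. by apply: functional_extensionality => w; rewrite /ncswap /ncx /ncy map_negb1. Qed.

Lemma nclie_scale a b f g : nclie (ncscale a f) (ncscale b g) = ncscale (a * b) (nclie f g).
Proof.
apply: functional_extensionality => w.
rewrite /nclie !ncmul_scalel !ncmul_scaler /ncscale; ring.
Qed.

Lemma s2_sym : ncswap (nclie (ncadd (ncx K) (ncscale (-1) (ncy K))) (nclie (ncx K) (ncy K))) =
  nclie (ncadd (ncx K) (ncscale (-1) (ncy K))) (nclie (ncx K) (ncy K)).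
Proof.
rewrite !ncswap_lie ncswap_add ncswap_scale ncswap_x ncswap_y.
have -> : ncadd (ncy K) (ncscale (-1) (ncx K)) = ncscale (-1) (ncadd (ncx K) (ncscale (-1) (ncy K))).
  by apply: functional_extensionality => w; rewrite /ncadd /ncscale; ring.
have -> : nclie (ncy K) (ncx K) = ncscale (-1) (nclie (ncx K) (ncy K)).
  by apply: functional_extensionality => w; rewrite /nclie /ncscale; ring.
rewrite nclie_scale.
apply: functional_extensionality => w; rewrite /ncscale; ring.
Qed.

Definition lin2 (a b : K) : ncser K := ncadd (ncscale a (ncx K)) (ncscale b (ncy K)).

Lemma val_xxy a1 b1 c1 d1 :
  nclie (ncadd (lin2 a1 b1) (ncscale (-1) (lin2 c1 d1))) (nclie (lin2 a1 b1) (lin2 c1 d1))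
    [:: false; false; true] = (a1 * d1 - b1 * c1) * (a1 - c1).
Proof.
rewrite /nclie /ncmul /lin2 /ncadd /ncscale /ncx /ncy.
rewrite !big_ord_recr !big_ord0 /=.
ring.
Qed.

Lemma val_yyx a1 b1 c1 d1 :
  nclie (ncadd (lin2 a1 b1) (ncscale (-1) (lin2 c1 d1))) (nclie (lin2 a1 b1) (lin2 c1 d1))
    [:: true; true; false] = - ((a1 * d1 - b1 * c1) * (b1 - d1)).
Proof.
rewrite /nclie /ncmul /lin2 /ncadd /ncscale /ncx /ncy.
rewrite !big_ord_recr !big_ord0 /=.
ring.
Qed.

End Final.


Section XiLemmas.
Variable K : fieldType.
Variable xi : ncser K -> ncser K.
Hypothesis Hxi : lie_endo xi.
Implicit Types f g h u v : ncser K.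

Definition zer : ncser K := fun _ => 0.

Lemma zer_L2 : in_L2 zer.
Proof.
have -> : zer = ncadd (ncscale (-1) (ncx K)) (ncx K).
  by apply: functional_extensionality => w; rewrite /zer /ncadd /ncscale; ring.
by apply: L2_add; [apply: L2_scale|]; apply: L2_x.
Qed.

Lemma xi_zer : xi zer = zer.
Proof.
case: Hxi => _ lin _.
have -> : zer = ncadd (ncscale (-1) (ncx K)) (ncx K).
  by apply: functional_extensionality => w; rewrite /zer /ncadd /ncscale; ring.
rewrite lin; try exact: L2_x.
by apply: functional_extensionality => w; rewrite /zer /ncadd /ncscale; ring.
Qed.

Lemma xi_add f g : in_L2 f -> in_L2 g -> xi (ncadd f g) = ncadd (xi f) (xi g).
Proof.
case: Hxi => _ lin _ Lf Lg.
have E : forall F : ncser K, ncscale 1 F = F.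
  by move=> F; apply: functional_extensionality => w; rewrite /ncscale mul1r.
by have := lin 1 f g Lf Lg; rewrite !E.
Qed.

Lemma xi_scale a f : in_L2 f -> xi (ncscale a f) = ncscale a (xi f).
Proof.
case: Hxi => _ lin _ Lf.
have E : forall F : ncser K, ncadd F zer = F.
  by move=> F; apply: functional_extensionality => w; rewrite /ncadd /zer addr0.
by have := lin a f zer Lf zer_L2; rewrite xi_zer !E.
Qed.

Lemma A_lie u v f g : in_A u v f -> in_A u v g -> in_A u v (nclie f g).
Proof.
move=> Af Ag.
have -> : nclie f g = ncadd (ncmul f g) (ncscale (-1) (ncmul g f)).
  by apply: functional_extensionality => w; rewrite /nclie /ncadd /ncscale; ring.
by apply: A_add; [apply: A_mul | apply: A_scale; apply: A_mul].
Qed.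

Lemma xi_A f : in_L2 f -> in_A (xi (ncx K)) (xi (ncy K)) (xi f).
Proof.
case: (Hxi) => _ _ lie.
elim=> {f} [||f g Lf IHf Lg IHg|a f Lf IHf|f g Lf IHf Lg IHg].
- exact: A_u.
- exact: A_v.
- by rewrite xi_add //; apply: A_add.
- by rewrite xi_scale //; apply: A_scale.
- by rewrite lie //; apply: A_lie.
Qed.

End XiLemmas.

Theorem theorem2p4 (K : fieldType) (charK0 : [pchar K] =i pred0)
  (xi xiinv : ncser K -> ncser K) :
  lie_aut_with_inv xi xiinv ->
  (forall f, symmetric_L2 f -> symmetric_L2 (xi f)) ->
  exists a b : K,
    let c := a ^+ 2 - b ^+ 2 in
    [/\ c != 0,
        xi (ncx K) = ncadd (ncscale a (ncx K)) (ncscale b (ncy K)),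
        xi (ncy K) = ncadd (ncscale b (ncx K)) (ncscale a (ncy K)),
        xiinv (ncx K) = ncadd (ncscale (c^-1 * a) (ncx K)) (ncscale (- (c^-1 * b)) (ncy K))
      & xiinv (ncy K) = ncadd (ncscale (- (c^-1 * b)) (ncx K)) (ncscale (c^-1 * a) (ncy K))].
Proof.
move=> [Hend invL invK1 invK2] Hsym.
have Hend' := Hend; case: Hend' => xiL _ xilie.
set u := xi (ncx K); set v := xi (ncy K).
have Lx := L2_x K; have Ly := L2_y K.
have Lu : in_L2 u by apply: xiL.
have Lv : in_L2 v by apply: xiL.
have Ax : in_A u v (ncx K).
  by rewrite -(invK2 _ Lx); apply: xi_A => //; apply: invL.
have Ay : in_A u v (ncy K).
  by rewrite -(invK2 _ Ly); apply: xi_A => //; apply: invL.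
have Hlin := key_linear charK0 Lu Lv Ax Ay.
have u0 := L2_nil Lu; have v0 := L2_nil Lv.
have D := det_nz Ax Ay u0 v0.
set a1 := u [:: false]; set b1 := u [:: true]; set c1 := v [:: false]; set d1 := v [:: true].
have linE : forall F : ncser K, F [::] = 0 -> (forall W, (1 < size W)%N -> F W = 0) ->
    F = lin2 (F [:: false]) (F [:: true]).
  move=> F F0 F2; apply: functional_extensionality => W.
  rewrite /lin2 /ncadd /ncscale /ncx /ncy.
  case: W => [|b [|b' W]].
  - by rewrite F0 /=; ring.
  - by case: b => /=; ring.
  - rewrite F2 //; case: b; rewrite /= ?andbF /=; ring.
have Eu : u = lin2 a1 b1 by apply: linE => // W HW; case: (Hlin W HW).
have Ev : v = lin2 c1 d1 by apply: linE => // W HW; case: (Hlin W HW).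
have E1 : b1 + d1 = a1 + c1.
  have S1 : symmetric_L2 (ncadd (ncx K) (ncy K)).
    split; first exact: L2_add.
    apply: functional_extensionality => w; rewrite /ncswap /ncadd /ncx /ncy !map_negb1 /=.
    by rewrite addrC.
  have [_ H] := Hsym _ S1.
  have := congr1 (fun F => F [:: false]) H.
  by rewrite xi_add // -/u -/v /ncswap /ncadd /=.
have E2 : a1 + b1 - c1 - d1 = 0.
  set s2 := nclie (ncadd (ncx K) (ncscale (-1) (ncy K))) (nclie (ncx K) (ncy K)).
  have Lsy : in_L2 (ncscale (-1) (ncy K)) by apply: L2_scale.
  have Lxy : in_L2 (ncadd (ncx K) (ncscale (-1) (ncy K))) by apply: L2_add.
  have Lxy2 : in_L2 (nclie (ncx K) (ncy K)) by apply: L2_lie.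
  have Ls2 : in_L2 s2 by apply: L2_lie.
  have [_ H] := Hsym _ (conj Ls2 (s2_sym K)).
  have := congr1 (fun F => F [:: false; false; true]) H.
  rewrite /s2 xilie // xi_add // xi_scale // xilie // -/u -/v Eu Ev /ncswap /=.
  rewrite val_xxy val_yyx => H2.
  have : (a1 * d1 - b1 * c1) * (a1 + b1 - c1 - d1) = 0.
    transitivity ((a1 * d1 - b1 * c1) * (a1 - c1) - - ((a1 * d1 - b1 * c1) * (b1 - d1))).
      ring.
    by rewrite H2 subrr.
  by move/eqP; rewrite mulf_eq0 (negbTE D) /= => /eqP.
have two : (2%:R : K) != 0 by move/pcharf0P: charK0 => ->.
have Ead : a1 = d1.
  apply/eqP; rewrite -subr_eq0; apply/eqP.
  have : 2%:R * (a1 - d1) = 0.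
    transitivity ((a1 + b1 - c1 - d1) - (b1 + d1 - (a1 + c1))); first ring.
    by rewrite E2 E1 subrr subr0.
  by move/eqP; rewrite mulf_eq0 (negbTE two) /= => /eqP.
have Ebc : c1 = b1.
  have H : b1 - c1 = 0 by rewrite -E2 Ead; ring.
  by apply/eqP; rewrite eq_sym -subr_eq0 H.
exists a1, b1 => c.
have Dc : c = a1 * d1 - b1 * c1 by rewrite /c Ead Ebc !expr2.
have cn0 : c != 0 by rewrite Dc.
have Ginv : forall al be F, in_L2 F -> F = ncadd (ncscale al u) (ncscale be v) ->
    xiinv F = ncadd (ncscale al (ncx K)) (ncscale be (ncy K)).
  move=> al be F LF EF.
  have Lg : in_L2 (ncadd (ncscale al (ncx K)) (ncscale be (ncy K))).
    by apply: L2_add; apply: L2_scale.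
  rewrite EF -(invK1 _ Lg) (xi_add Hend) ?(xi_scale Hend) //; by apply: L2_scale.
split => //.
- by move: Ev; rewrite Ebc -Ead.
- apply: Ginv => //; rewrite Eu Ev Ebc -Ead.
  apply: functional_extensionality => w; rewrite /lin2 /ncadd /ncscale.
  have -> : c = a1 ^+ 2 - b1 ^+ 2 by [].
  field; by rewrite -/c.
- apply: Ginv => //; rewrite Eu Ev Ebc -Ead.
  apply: functional_extensionality => w; rewrite /lin2 /ncadd /ncscale.
  have -> : c = a1 ^+ 2 - b1 ^+ 2 by [].
  field; by rewrite -/c.
Qed.
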